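(* Let $\mathscr{A}\in\mathbb{R}^{n_1\times n_2\times n_3}$, $\mathscr{B}\in\mathbb{R}^{n_1\times s\times n_3}$, and suppose $k$ steps of the tensor tubal-global Golub–Kahan algorithm described in the context have been run (without breakdown). Then the tensors $\mathscr{V}_i$ and the tensors $\mathscr{U}_i$ produced are each T-orthonormal: $\langle\mathscr{V}_i,\mathscr{V}_j\rangle_T=\langle\mathscr{U}_i,\mathscr{U}_j\rangle_T=\mathbf{e}$ if $i=j$ and $=\mathbf{o}$ if $i\neq j$.
   Context: All tensors are real third-order arrays. $\widehat{\mathscr{A}}=\mathscr{A}\times_3F_{n_3}$ denotes the tensor obtained by applying the discrete Fourier transform ($F_{n_3}$ with entries $\omega^{(i-1)(j-1)}$, $\omega=e^{-2\pi\mathrm{i}/n_3}$) to each tube; its frontal slices $\hat A^{(k)}$ are the Fourier slices. T-product: $\mathscr{A}\star\mathscr{B}$ has Fourier slices $\hat A^{(k)}\hat B^{(k)}$. Transpose $\mathscr{A}^T$: transpose each frontal slice and reverse the order of frontal slices $2,\dots,n_3$. A tube is an element of $\mathbb{R}^{1\times1\times n_3}$; $\mathbf{e}$ has entries $(1,0,\dots,0)$, $\mathbf{o}$ is the zero tube. For a tube $\mathbf{a}$, $\mathbf{a}\divideontimes\mathscr{W}$ has $(i,j)$ tube $\mathbf{a}\star\mathscr{W}(i,j,:)$. T-trace: tube whose $k$-th Fourier slice is the trace of the $k$-th Fourier slice. Tubal inner product $\langle\mathscr{X},\mathscr{Y}\rangle_T=\text{T-trace}(\mathscr{X}^T\star\mathscr{Y})$.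 Normalization of $\mathscr{W}$: $\mathbf{a}$ is the tube with $k$-th Fourier coefficient $\|\hat W^{(k)}\|_F$ (breakdown if one is zero) and $\mathscr{Q}$ has Fourier slices $\hat W^{(k)}/\|\hat W^{(k)}\|_F$; output $[\mathscr{Q},\mathbf{a}]$. Tubal-global Golub–Kahan algorithm: $\mathscr{V}_0=0\in\mathbb{R}^{n_2\times s\times n_3}$, $[\mathscr{U}_1,\mathbf{a}_1]=\mathrm{Normalization}(\mathscr{B})$; for $j=1,\dots,k$: $\widetilde{\mathscr{V}}=\mathscr{A}^T\star\mathscr{U}_j-\mathbf{a}_j\divideontimes\mathscr{V}_{j-1}$, $[\mathscr{V}_j,\mathbf{b}_j]=\mathrm{Normalization}(\widetilde{\mathscr{V}})$, $\widetilde{\mathscr{U}}=\mathscr{A}\star\mathscr{V}_j-\mathbf{b}_j\divideontimes\mathscr{U}_j$, $[\mathscr{U}_{j+1},\mathbf{a}_{j+1}]=\mathrm{Normalization}(\widetilde{\mathscr{U}})$. *)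

(* Defs.v *)
From HB Require Import structures.
From mathcomp Require Import all_boot all_order all_algebra.
From mathcomp Require Import reals trigo.
From mathcomp Require Import complex.
Set Implicit Arguments. Unset Strict Implicit. Unset Printing Implicit Defensive.
Import Order.TTheory GRing.Theory Num.Theory.
Local Open Scope ring_scope.

Section Tensors.
Variable R : realType.
Local Notation C := (complex R).

(* A third-order array of size n1 x n2 x n3, given by its frontal slices
   A(:,:,k), k = 0..n3-1.  Entries are stored in C; "real" tensors are those
   whose entries have zero imaginary part (see [real_tensor]). *)
Definition tensor (n1 n2 n3 : nat) := 'I_n3 -> 'M[C]_(n1, n2).
Definition tube (n3 : nat) := tensor 1 1 n3.

Definition cre (z : C) : R := let: Complex a _ := z in a.
Definition cim (z : C) : R := let: Complex _ b := z in b.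

Definition real_tensor n1 n2 n3 (A : tensor n1 n2 n3) : Prop :=
  forall k i j, cim (A k i j) = 0.

Variable n3 : nat.

Definition omega : C :=
  Complex (cos (2 * pi / n3%:R)) (- sin (2 * pi / n3%:R)).

Definition fft n1 n2 (A : tensor n1 n2 n3) : tensor n1 n2 n3 :=
  fun k => \sum_(j < n3) (omega ^+ (k * j)) *: A j.

Definition ifft n1 n2 (Ah : tensor n1 n2 n3) : tensor n1 n2 n3 :=
  fun j => (n3%:R)^-1 *: \sum_(k < n3) (omega ^+ (k * j))^-1 *: Ah k.

Definition tprod n1 n2 n4 (A : tensor n1 n2 n3) (B : tensor n2 n4 n3)
  : tensor n1 n4 n3 :=
  ifft (fun k => fft A k *m fft B k).

(* index k |-> (n3 - k) mod n3 (0-based), reversing slices 2..n3 *)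
Definition rev_idx (k : 'I_n3) : 'I_n3 :=
  Ordinal (@ltn_pmod (n3 - k) n3 (leq_ltn_trans (leq0n k) (ltn_ord k))).

Definition ttrans n1 n2 (A : tensor n1 n2 n3) : tensor n2 n1 n3 :=
  fun k => (A (rev_idx k))^T.

Definition te : tube n3 := fun k => ((k == 0 :> nat)%:R)%:M.
Definition to : tube n3 := fun _ => 0.

Definition tube_of n1 n2 (W : tensor n1 n2 n3) i j : tube n3 :=
  fun k => (W k i j)%:M.

Definition tubemul n1 n2 (a : tube n3) (W : tensor n1 n2 n3) : tensor n1 n2 n3 :=
  fun k => \matrix_(i, j) (tprod a (tube_of W i j) k 0 0).

Definition ttrace n (A : tensor n n n3) : tube n3 :=
  ifft (fun k => (\tr (fft A k))%:M).

Definition tinner n1 n2 (X Y : tensor n1 n2 n3) : tube n3 :=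
  ttrace (tprod (ttrans X) Y).

Definition fnorm m n (M : 'M[C]_(m, n)) : C :=
  Complex (Num.sqrt (\sum_(i < m) \sum_(j < n) (cre (M i j) ^+ 2 + cim (M i j) ^+ 2))) 0.

Definition normalization n1 n2 (W : tensor n1 n2 n3) : tensor n1 n2 n3 * tube n3 :=
  (ifft (fun k => (fnorm (fft W k))^-1 *: fft W k),
   ifft (fun k => (fnorm (fft W k))%:M)).

Definition no_breakdown n1 n2 (W : tensor n1 n2 n3) : Prop :=
  forall k, fnorm (fft W k) != 0.

(* State of the tubal-global Golub--Kahan algorithm after step j:
   gkU = U_{j+1}, gka = a_{j+1}, gkV = V_j, gkb = b_j,
   gkVt = tilde V computed at step j, gkUt = tilde U computed at step j
   (for j = 0: V_0 = 0, and the "tilde U" to be normalized is B). *)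
Record gk_state n1 n2 s := GKState {
  gkU : tensor n1 s n3; gka : tube n3;
  gkV : tensor n2 s n3; gkb : tube n3;
  gkVt : tensor n2 s n3; gkUt : tensor n1 s n3 }.

Fixpoint golub_kahan n1 n2 s (A : tensor n1 n2 n3) (B : tensor n1 s n3)
  (j : nat) : gk_state n1 n2 s :=
  match j with
  | 0 => GKState (normalization B).1 (normalization B).2
                 (fun _ => 0) to (fun _ => 0) B
  | j'.+1 =>
    let st := golub_kahan A B j' in
    let Vt : tensor n2 s n3 :=
      fun k => tprod (ttrans A) (gkU st) k - tubemul (gka st) (gkV st) k in
    let Vb := normalization Vt in
    let Ut : tensor n1 s n3 :=
      fun k => tprod A Vb.1 k - tubemul Vb.2 (gkU st) k in
    let Ua := normalization Ut in
    GKState Ua.1 Ua.2 Vb.1 Vb.2 Vt Ut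
  end.

Definition gkU_ n1 n2 s (A : tensor n1 n2 n3) (B : tensor n1 s n3) (i : nat) :=
  gkU (golub_kahan A B i.-1).
Definition gkV_ n1 n2 s (A : tensor n1 n2 n3) (B : tensor n1 s n3) (i : nat) :=
  gkV (golub_kahan A B i).

Definition gk_no_breakdown n1 n2 s (A : tensor n1 n2 n3) (B : tensor n1 s n3)
  (k : nat) : Prop :=
  no_breakdown B /\
  forall j, (1 <= j <= k)%N ->
    no_breakdown (gkVt (golub_kahan A B j)) /\
    no_breakdown (gkUt (golub_kahan A B j)).

End Tensors.

(* Main.v *)
Require Import Defs.
From HB Require Import structures.
From mathcomp Require Import all_boot all_order all_algebra.
From mathcomp Require Import reals trigo.
From mathcomp Require Import complex.
From mathcomp Require Import zify ring lra.
Set Implicit Arguments. Unset Strict Implicit. Unset Printing Implicit Defensive.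
Import Order.TTheory GRing.Theory Num.Theory.
Local Open Scope ring_scope.

Section Omega.
Variable R : realType.
Local Notation C := (complex R).

Definition ee (t : R) : C := Complex (cos t) (- sin t).

Lemma eeD a b : ee (a + b) = ee a * ee b.
Proof.
rewrite /ee cosD sinD; simpc; congr Complex; ring.
Qed.

Lemma ee0 : ee 0 = 1.
Proof. by rewrite /ee cos0 sin0 oppr0. Qed.

Lemma eeX t m : ee t ^+ m = ee (m%:R * t).
Proof.
elim: m => [|m IH]; first by rewrite mul0r ee0.
by rewrite exprS IH -eeD mulrSr mulrDl mul1r addrC.
Qed.

Lemma ee_conj t : conjc (ee t) * ee t = 1.
Proof.
rewrite /ee; simpc. congr Complex.
  by rewrite -(cos2Dsin2 t); ring.
ring.
Qed.

Lemma ee_neq1 t : 0 < t < pi *+ 2 -> ee t != 1.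
Proof.
move=> /andP[t0 t2]; apply/negP => /eqP [].
have -> : t = (t / 2) *+ 2 by rewrite -mulr_natr mulfVK // pnatr_eq0.
rewrite cos_mulr2n cos2sin2 => H.
have : 0 < sin (t / 2).
  apply: sin_gt0_pi; apply/andP; split.
    by rewrite divr_gt0.
  by rewrite ltr_pdivrMr // mulr_natr.
move: H; nra.
Qed.
End Omega.

Section Fourier.
Variable R : realType.
Local Notation C := (complex R).
Variable n : nat.
Local Notation w := (omega R n).

Lemma omegaE : w = ee (2 * pi / n%:R). Proof. by []. Qed.

Lemma omega_n : (0 < n)%N -> w ^+ n = 1.
Proof.
move=> n0; rewrite omegaE eeX mulrCA mulfV ?pnatr_eq0 -?lt0n // mulr1.
by rewrite /ee mulr_natl cos2pi sin2pi oppr0.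
Qed.

Lemma omega_neq1 m : (0 < m < n)%N -> w ^+ m != 1.
Proof.
move=> /andP[m0 mn]; have n0 : (0 < n)%N by apply: leq_trans mn.
rewrite omegaE eeX; apply: ee_neq1; apply/andP; split.
  by rewrite !mulr_gt0 ?invr_gt0 ?ltr0n ?pi_gt0.
rewrite mulrA ltr_pdivrMr ?ltr0n //.
have -> : pi *+ 2 * n%:R = (2 * pi) * n%:R :> R by rewrite mulr_natl.
by rewrite mulrC ltr_pM2l ?mulr_gt0 ?pi_gt0 // ltr_nat.
Qed.

Lemma omega_conj m : conjc (w ^+ m) * w ^+ m = 1.
Proof. by rewrite rmorphXn /= -exprMn omegaE ee_conj expr1n. Qed.

Lemma omega_neq0 : w != 0.
Proof.
apply/negP => /eqP h; have := omega_conj 1; rewrite h expr1 mulr0 => /eqP.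
by rewrite eq_sym oner_eq0.
Qed.

Lemma omega_unit m : w ^+ m \is a GRing.unit.
Proof. by rewrite unitrX // unitfE omega_neq0. Qed.

Lemma omega_mod m : (0 < n)%N -> w ^+ m = w ^+ (m %% n).
Proof.
move=> n0; rewrite {1}(divn_eq m n) exprD [(_ * n)%N]mulnC exprM omega_n // expr1n mul1r.
done.
Qed.

Lemma geom0 (z : C) : z ^+ n = 1 -> z != 1 -> \sum_(j < n) z ^+ j = 0.
Proof.
move=> zn z1; have := subrX1 z n; rewrite zn subrr => /esym /eqP.
by rewrite mulf_eq0 subr_eq0 (negbTE z1) /= => /eqP.
Qed.

Lemma omega_inj (k l : 'I_n) : (w ^+ k == w ^+ l) = (k == l).
Proof.
apply/idP/idP => [/eqP h|/eqP -> //]; apply/negP => /negP kl.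
wlog lt : k l h kl / (l < k)%N.
  move=> W; case: (ltngtP l k) => c; first exact: W h kl c.
    by apply: (W l k) => //; rewrite eq_sym.
  by move: kl; rewrite (_ : k = l) ?eqxx //; apply: val_inj.
have := @omega_neq1 (k - l); rewrite subn_gt0 lt (leq_ltn_trans (leq_subr _ _) (ltn_ord k)) /=.
have -> : w ^+ (k - l) = 1.
  apply: (mulIr (omega_unit l)); rewrite -exprD subnK ?mul1r //; exact: ltnW.
by rewrite eqxx => /(_ isT).
Qed.

Lemma rev_idxK : involutive (@rev_idx n).
Proof.
move=> k; apply: val_inj => /=; have := ltn_ord k.
case: (posnP k) => [->|k0] kn; first by rewrite subn0 modnn subn0 modnn.
have h1 : ((n - k) %% n = n - k)%N by apply: modn_small; rewrite ltn_subrL k0; apply: leq_ltn_trans kn.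
by rewrite h1 subKn ?modn_small // ltnW.
Qed.

Lemma rev_inj : injective (@rev_idx n).
Proof. exact: can_inj rev_idxK. Qed.

Lemma omega_rev (k : 'I_n) j : w ^+ (rev_idx k * j) = (w ^+ (k * j))^-1.
Proof.
have n0 : (0 < n)%N by apply: leq_ltn_trans (ltn_ord k).
apply: (mulIr (omega_unit (k * j))); rewrite mulVr ?omega_unit // -exprD -mulnDl.
rewrite omega_mod // -modnMml /= modnDml subnK ?mod0n ?modnn ?mul0n ?mod0n //.
exact: ltnW.
Qed.

Lemma conj_omega m : conjc (w ^+ m) = (w ^+ m)^-1.
Proof.
by apply: (mulIr (omega_unit m)); rewrite mulVr ?omega_unit // omega_conj.
Qed.

Lemma fft_entry n1 n2 (X : tensor R n1 n2 n) k a b :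
  fft X k a b = \sum_(j < n) w ^+ (k * j) * X j a b.
Proof. by rewrite /fft summxE; apply: eq_bigr => j _; rewrite mxE. Qed.

Lemma ifft_entry n1 n2 (F : tensor R n1 n2 n) j a b :
  ifft F j a b = n%:R^-1 * \sum_(k < n) (w ^+ (k * j))^-1 * F k a b.
Proof. by rewrite /ifft mxE summxE; congr (_ * _); apply: eq_bigr => k _; rewrite mxE. Qed.

Lemma dft_coef (k l : 'I_n) :
  \sum_(j < n) w ^+ (k * j) / n%:R * (w ^+ (l * j))^-1 = (k == l)%:R.
Proof.
have n0 : (0 < n)%N by apply: leq_ltn_trans (ltn_ord k).
under eq_bigr do rewrite mulrAC.
rewrite -big_distrl /=.
under eq_bigr do rewrite !exprM -exprVn -exprMn.
case: eqP => [->|lk].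
  under eq_bigr do rewrite mulrV ?omega_unit // expr1n.
  by rewrite sumr_const card_ord mulrV // unitfE pnatr_eq0 -lt0n.
rewrite geom0 ?mul0r //.
  by rewrite exprMn exprVn -!exprM !(mulnC _ n) !exprM omega_n // !expr1n invr1 mulr1.
apply/negP => /eqP h; apply: lk; apply/eqP; rewrite -omega_inj.
by rewrite -[X in _ == X]mulr1 -h mulrCA mulrV ?omega_unit // mulr1 eqxx.
Qed.

Lemma fft_ifft n1 n2 (F : tensor R n1 n2 n) k : fft (ifft F) k = F k.
Proof.
apply/matrixP => a b; rewrite fft_entry.
under eq_bigr do rewrite ifft_entry mulrA mulr_sumr.
rewrite exchange_big /=.
under eq_bigr => l _ do [under eq_bigr do rewrite mulrA; rewrite -big_distrl dft_coef].
rewrite (bigD1 k) //= eqxx mul1r big1 ?addr0 // => l lk.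
by rewrite eq_sym (negbTE lk) mul0r.
Qed.

Lemma ifft_const (c : C) (j : 'I_n) :
  ifft (fun _ => c%:M : 'M[C]_1) j = (c * (j == 0 :> nat)%:R)%:M.
Proof.
have n0 : (0 < n)%N by apply: leq_ltn_trans (ltn_ord j).
apply/matrixP => a b; rewrite ifft_entry !mxE.
rewrite !ord1 eqxx !mulr1n -big_distrl /= mulrA mulrC; congr (_ * _).
case: eqP => [j0|j0].
  under eq_bigr do rewrite j0 muln0 expr0 invr1.
  by rewrite sumr_const card_ord mulVf // pnatr_eq0 -lt0n.
under eq_bigr do rewrite mulnC exprM -exprVn.
rewrite geom0 ?mulr0 //.
  by rewrite exprVn -exprM mulnC exprM omega_n // expr1n invr1.
apply/negP => /eqP h; have : w ^+ j = w ^+ (@Ordinal n 0 n0).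
  by rewrite expr0 -[LHS]invrK h invr1.
by move/eqP; rewrite omega_inj => /eqP /(congr1 val) /= /j0.
Qed.

Lemma fft_tprod n1 n2 n4 (X : tensor R n1 n2 n) (Y : tensor R n2 n4 n) k :
  fft (tprod X Y) k = fft X k *m fft Y k.
Proof. exact: fft_ifft. Qed.

Lemma fft_sub n1 n2 (X Y : tensor R n1 n2 n) k :
  fft (fun j => X j - Y j) k = fft X k - fft Y k.
Proof. by rewrite /fft -sumrB; apply: eq_bigr => j _; rewrite scalerBr. Qed.

Lemma fft_tubemul n1 n2 (a : tube R n) (W : tensor R n1 n2 n) k :
  fft (tubemul a W) k = fft a k 0 0 *: fft W k.
Proof.
apply/matrixP => i l; rewrite fft_entry mxE.
under eq_bigr do rewrite mxE.
have := fft_entry (tprod a (tube_of W i l)) k 0 0.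
rewrite fft_tprod => <-; rewrite mxE big_ord1; congr (_ * _).
by rewrite !fft_entry; apply: eq_bigr => j _; rewrite mxE.
Qed.

Lemma fft_norm1 n1 n2 (W : tensor R n1 n2 n) k :
  fft (normalization W).1 k = (fnorm (fft W k))^-1 *: fft W k.
Proof. exact: fft_ifft. Qed.

Lemma fft_norm2 n1 n2 (W : tensor R n1 n2 n) k :
  fft (normalization W).2 k 0 0 = fnorm (fft W k).
Proof. by rewrite fft_ifft mxE. Qed.

Lemma conj_realP (z : C) : (conjc z = z) <-> cim z = 0.
Proof.
case: z => a b /=; split; first by case=> h; lra.
by move=> ->; rewrite oppr0.
Qed.

Definition mconj m1 m2 (M : 'M[C]_(m1, m2)) := map_mx conjc M.

Lemma real_fft n1 n2 (X : tensor R n1 n2 n) k :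
  real_tensor X -> fft X (rev_idx k) = mconj (fft X k).
Proof.
move=> rX; apply/matrixP => a b; rewrite mxE !fft_entry rmorph_sum.
apply: eq_bigr => j _; rewrite rmorphM /= omega_rev conj_omega.
by rewrite (proj2 (conj_realP _) (rX _ _ _)).
Qed.

Lemma real_ifft n1 n2 (F : tensor R n1 n2 n) :
  (forall k, F (rev_idx k) = mconj (F k)) -> real_tensor (ifft F).
Proof.
move=> HF j a b; apply/conj_realP; rewrite ifft_entry rmorphM /= conjc_inv conjc_nat.
congr (_ * _); rewrite rmorph_sum (reindex_inj rev_inj) /=.
apply: eq_bigr => k _; rewrite rmorphM /= conjc_inv conj_omega invrK HF mxE conjcK.
by rewrite omega_rev.
Qed.

Lemma fft_ttrans n1 n2 (X : tensor R n1 n2 n) k :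
  real_tensor X -> fft (ttrans X) k = (mconj (fft X k))^T.
Proof.
move=> rX; apply/matrixP => a b; rewrite !mxE !fft_entry rmorph_sum.
rewrite (reindex_inj rev_inj) /=; apply: eq_bigr => j _.
rewrite /ttrans rev_idxK mxE rmorphM /= mulnC omega_rev conj_omega.
by rewrite mulnC (proj2 (conj_realP _) (rX _ _ _)).
Qed.
End Fourier.

Section Inner.
Variable R : realType.
Local Notation C := (complex R).

Definition ip m1 m2 (X Y : 'M[C]_(m1, m2)) : C := \tr ((mconj X)^T *m Y).

Variables m1 m2 : nat.
Implicit Types X Y Z : 'M[C]_(m1, m2).

Lemma ipE X Y : ip X Y = \sum_(i < m2) \sum_(l < m1) conjc (X l i) * Y l i.
Proof. by rewrite /ip /mxtrace; apply: eq_bigr => i _; rewrite mxE; apply: eq_bigr => l _; rewrite !mxE. Qed.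

Lemma ipZl c X Y : ip (c *: X) Y = conjc c * ip X Y.
Proof.
rewrite !ipE mulr_sumr; apply: eq_bigr => i _; rewrite mulr_sumr; apply: eq_bigr => l _.
by rewrite mxE rmorphM mulrA.
Qed.

Lemma ipZr c X Y : ip X (c *: Y) = c * ip X Y.
Proof.
rewrite !ipE mulr_sumr; apply: eq_bigr => i _; rewrite mulr_sumr; apply: eq_bigr => l _.
by rewrite mxE mulrCA.
Qed.

Lemma ipBr X Y Z : ip X (Y - Z) = ip X Y - ip X Z.
Proof.
rewrite !ipE -sumrB; apply: eq_bigr => i _; rewrite -sumrB; apply: eq_bigr => l _.
by rewrite !mxE mulrBr.
Qed.

Lemma ipBl X Y Z : ip (X - Y) Z = ip X Z - ip Y Z.
Proof.
rewrite !ipE -sumrB; apply: eq_bigr => i _; rewrite -sumrB; apply: eq_bigr => l _.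
by rewrite !mxE rmorphB mulrBl.
Qed.

Lemma ipDl X Y Z : ip (X + Y) Z = ip X Z + ip Y Z.
Proof.
rewrite !ipE -big_split; apply: eq_bigr => i _; rewrite -big_split; apply: eq_bigr => l _.
by rewrite !mxE rmorphD mulrDl.
Qed.

Lemma ip0l Y : ip 0 Y = 0.
Proof. by rewrite ipE big1 // => i _; rewrite big1 // => l _; rewrite mxE rmorph0 mul0r. Qed.

Lemma ip_sym X Y : ip Y X = conjc (ip X Y).
Proof.
rewrite !ipE rmorph_sum; apply: eq_bigr => i _; rewrite rmorph_sum; apply: eq_bigr => l _.
by rewrite rmorphM /= conjcK mulrC.
Qed.

Lemma mconjK p q (M : 'M[C]_(p, q)) : mconj (mconj M) = M.
Proof. by apply/matrixP => i j; rewrite !mxE conjcK. Qed.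

Lemma ip_adj p (M : 'M[C]_(p, m1)) (X : 'M[C]_(p, m2)) Y :
  ip X (M *m Y) = ip ((mconj M)^T *m X) Y.
Proof.
rewrite /ip (_ : mconj ((mconj M)^T *m X) = M^T *m mconj X).
  by rewrite trmx_mul trmxK mulmxA.
apply/matrixP => i j; rewrite !mxE rmorph_sum; apply: eq_bigr => l _.
by rewrite !mxE rmorphM /= conjcK.
Qed.

Lemma conj_mul_self (z : C) : conjc z * z = Complex (cre z ^+ 2 + cim z ^+ 2) 0.
Proof. by case: z => a b /=; simpc; congr Complex; ring. Qed.

Lemma fnorm_conj p q (M : 'M[C]_(p, q)) : conjc (fnorm M) = fnorm M.
Proof. by rewrite /fnorm /= oppr0. Qed.

Lemma Csum p (F : 'I_p -> R) : Complex (\sum_i F i) 0 = \sum_i Complex (F i) 0.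
Proof. by apply: (big_morph (fun x => Complex x 0)) => [x y|] //=; simpc. Qed.

Lemma ip_self X : ip X X = fnorm X * fnorm X.
Proof.
have S0 : 0 <= \sum_(i < m1) \sum_(j < m2) (cre (X i j) ^+ 2 + cim (X i j) ^+ 2).
  by apply: sumr_ge0 => i _; apply: sumr_ge0 => j _; rewrite addr_ge0 ?sqr_ge0.
rewrite /fnorm; simpc; rewrite -expr2 sqr_sqrtr // ipE exchange_big /=.
rewrite Csum; apply: eq_bigr => i _; rewrite Csum.
by apply: eq_bigr => j _; rewrite conj_mul_self.
Qed.

Lemma ip_normalize X : fnorm X != 0 ->
  ip ((fnorm X)^-1 *: X) ((fnorm X)^-1 *: X) = 1.
Proof.
move=> nz; rewrite ipZl ipZr ip_self conjc_inv fnorm_conj.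
by field.
Qed.
End Inner.

Section Slice.
Variable R : realType.
Local Notation C := (complex R).
Variables (m1 m2 s : nat) (M : 'M[C]_(m1, m2)).
Local Notation MH := ((mconj M)^T).
Variables (u : nat -> 'M[C]_(m1, s)) (v : nat -> 'M[C]_(m2, s)) (al be : nat -> C).
Variable K : nat.
Hypothesis Hv0 : v 0 = 0.
Hypothesis Hu0 : ip (u 0) (u 0) = 1.
Hypothesis Hal : forall j, conjc (al j) = al j.
Hypothesis Hbe : forall j, conjc (be j) = be j.
Hypothesis HV : forall j, (j < K)%N -> be j.+1 *: v j.+1 = MH *m u j - al j *: v j.
Hypothesis HU : forall j, (j < K)%N -> al j.+1 *: u j.+1 = M *m v j.+1 - be j.+1 *: u j.
Hypothesis HVn : forall j, (j < K)%N -> ip (v j.+1) (v j.+1) = 1.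
Hypothesis HUn : forall j, (j < K)%N -> ip (u j.+1) (u j.+1) = 1.
Hypothesis Hbe0 : forall j, (j < K)%N -> be j.+1 != 0.
Hypothesis Hal0 : forall j, (j < K)%N -> al j.+1 != 0.

Lemma mconj_trK : (mconj MH)^T = M.
Proof. by apply/matrixP => i j; rewrite !mxE conjcK. Qed.

Lemma slice_orth j : (j <= K)%N -> forall i l, (i <= j)%N -> (l <= j)%N ->
  ip (u i) (u l) = (i == l)%:R /\ ip (v i) (v l) = ((i == l) && (0 < i)%N)%:R.
Proof.
elim: j => [_|j IH jK] i l.
  rewrite !leqn0 => /eqP -> /eqP ->; by rewrite Hu0 Hv0 ip0l.
have jK' : (j < K)%N by [].
have {}IH := IH (ltnW jK').
have vfact : forall i0, (i0 <= j)%N -> ip (v i0) (v j.+1) = 0.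
  move=> [|i'] hi; first by rewrite Hv0 ip0l.
  suff h : be j.+1 * ip (v i'.+1) (v j.+1) = 0.
    by move/eqP: h; rewrite mulf_eq0 (negbTE (Hbe0 jK')) => /eqP.
  rewrite -ipZr HV // ipBr ipZr ip_adj mconj_trK.
  have -> : M *m v i'.+1 = al i'.+1 *: u i'.+1 + be i'.+1 *: u i'.
    by rewrite HU ?subrK //; apply: ltn_trans hi jK'.
  rewrite ipDl !ipZl Hal Hbe.
  have [h1 _] := IH i'.+1 j hi (leqnn j).
  have [h2 _] := IH i' j (ltnW hi) (leqnn j).
  have [_ h3] := IH i'.+1 j hi (leqnn j).
  rewrite h1 h2 h3 /= andbT (ltn_eqF hi) mulr0 addr0.
  by case: eqP => [<-|_]; rewrite ?subrr // !mulr0 subrr.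
have ufact : forall i0, (i0 <= j)%N -> ip (u i0) (u j.+1) = 0.
  move=> i0 hi; suff h : al j.+1 * ip (u i0) (u j.+1) = 0.
    by move/eqP: h; rewrite mulf_eq0 (negbTE (Hal0 jK')) => /eqP.
  rewrite -ipZr HU // ipBr ipZr ip_adj.
  have -> : MH *m u i0 = be i0.+1 *: v i0.+1 + al i0 *: v i0.
    by rewrite HV ?subrK //; apply: leq_ltn_trans jK'.
  rewrite ipDl !ipZl Hal Hbe (vfact i0 hi) mulr0 addr0.
  have [h1 _] := IH i0 j hi (leqnn j).
  rewrite h1; case: eqP => [->|ij]; first by rewrite HVn // !mulr1 subrr.
  rewrite vfact ?mulr0 ?subrr //; rewrite ltn_neqAle hi andbT; exact/eqP.
move=> Hi Hl.
have Ci : i = j.+1 \/ (i <= j)%N by move: Hi; rewrite leq_eqVlt ltnS => /orP[/eqP|]; [left|right].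
have Cl : l = j.+1 \/ (l <= j)%N by move: Hl; rewrite leq_eqVlt ltnS => /orP[/eqP|]; [left|right].
case: Ci => [->|hi]; case: Cl => [->|hl].
- by rewrite eqxx HUn // HVn.
- rewrite ip_sym ufact // ip_sym vfact // rmorph0 (gtn_eqF (hl : (l < j.+1)%N)); split => //.
- by rewrite ufact // vfact // (ltn_eqF (hi : (i < j.+1)%N)).
- exact: IH.
Qed.
End Slice.

Section Glue.
Variable R : realType.
Local Notation C := (complex R).
Variable n : nat.

Lemma mconjM p q r (X : 'M[C]_(p, q)) (Y : 'M[C]_(q, r)) :
  mconj (X *m Y) = mconj X *m mconj Y.
Proof. exact: map_mxM. Qed.

Lemma mconjZ p q c (X : 'M[C]_(p, q)) : mconj (c *: X) = conjc c *: mconj X.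
Proof. by apply/matrixP => i j; rewrite !mxE rmorphM. Qed.

Lemma real_tprod n1 n2 n4 (X : tensor R n1 n2 n) (Y : tensor R n2 n4 n) :
  real_tensor X -> real_tensor Y -> real_tensor (tprod X Y).
Proof.
move=> rX rY; apply: real_ifft => k.
by rewrite !real_fft // mconjM.
Qed.

Lemma real_ttrans n1 n2 (X : tensor R n1 n2 n) :
  real_tensor X -> real_tensor (ttrans X).
Proof. by move=> rX k i j; rewrite /ttrans mxE. Qed.

Lemma cimB (a b : C) : cim (a - b) = cim a - cim b.
Proof. by case: a; case: b. Qed.

Lemma real_sub n1 n2 (X Y : tensor R n1 n2 n) :
  real_tensor X -> real_tensor Y -> real_tensor (fun k => X k - Y k).
Proof. by move=> rX rY k i j; rewrite !mxE cimB rX rY subrr. Qed.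

Lemma real_tube_of n1 n2 (W : tensor R n1 n2 n) i j :
  real_tensor W -> real_tensor (tube_of W i j).
Proof. by move=> rW k a b; rewrite /tube_of !ord1 mxE /= mulr1n rW. Qed.

Lemma real_tubemul n1 n2 (a : tube R n) (W : tensor R n1 n2 n) :
  real_tensor a -> real_tensor W -> real_tensor (tubemul a W).
Proof.
move=> ra rW k i j; rewrite /tubemul mxE.
by apply: real_tprod => //; apply: real_tube_of.
Qed.

Lemma fnorm_mconj p q (X : 'M[C]_(p, q)) : fnorm (mconj X) = fnorm X.
Proof.
rewrite /fnorm; congr Complex; congr Num.sqrt; apply: eq_bigr => i _.
by apply: eq_bigr => j _; rewrite mxE; case: (X i j) => a b /=; rewrite sqrrN.
Qed.

Lemma real_norm1 n1 n2 (W : tensor R n1 n2 n) :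
  real_tensor W -> real_tensor (normalization W).1.
Proof.
move=> rW; apply: real_ifft => k.
by rewrite real_fft // fnorm_mconj mconjZ conjc_inv fnorm_conj.
Qed.

Lemma real_norm2 n1 n2 (W : tensor R n1 n2 n) :
  real_tensor W -> real_tensor (normalization W).2.
Proof.
move=> rW; apply: real_ifft => k.
rewrite real_fft // fnorm_mconj; apply/matrixP => i j.
by rewrite !mxE rmorphMn; congr (_ *+ _); rewrite [RHS]fnorm_conj.
Qed.

Lemma real0 n1 n2 : real_tensor (fun _ : 'I_n => 0 : 'M[C]_(n1, n2)).
Proof. by move=> k i j; rewrite mxE. Qed.

Lemma real_to : real_tensor (@to R n).
Proof. exact: real0. Qed.

Lemma fft0 n1 n2 k : fft (fun _ : 'I_n => 0 : 'M[C]_(n1, n2)) k = 0.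
Proof. by rewrite /fft big1 // => j _; rewrite scaler0. Qed.

Lemma tinner_delta n1 n2 (X Y : tensor R n1 n2 n) (b : bool) :
  real_tensor X -> (forall k, ip (fft X k) (fft Y k) = b%:R) ->
  tinner X Y =1 (if b then @te R n else @to R n).
Proof.
move=> rX H j; rewrite /tinner /ttrace.
have -> : ifft (fun k => (\tr (fft (tprod (ttrans X) Y) k))%:M) j =
          ifft (fun _ => (b%:R)%:M : 'M[C]_1) j.
  rewrite /ifft; congr (_ *: _); apply: eq_bigr => k _; congr (_ *: _).
  by rewrite fft_tprod fft_ttrans // -(H k).
rewrite ifft_const; case: b {H}; first by rewrite mul1r.
by apply/matrixP => a c; rewrite !mxE mul0r mul0rn.
Qed.
End Glue.

Section Main.
Variables (R : realType) (n1 n2 n3 s : nat).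
Variables (A : tensor R n1 n2 n3) (B : tensor R n1 s n3).
Local Notation st := (golub_kahan A B).

Lemma stVt j : gkVt (st j.+1) =
  (fun k => tprod (ttrans A) (gkU (st j)) k - tubemul (gka (st j)) (gkV (st j)) k).
Proof. by []. Qed.
Lemma stV j : gkV (st j.+1) = (normalization (gkVt (st j.+1))).1. Proof. by []. Qed.
Lemma stb j : gkb (st j.+1) = (normalization (gkVt (st j.+1))).2. Proof. by []. Qed.
Lemma stUt j : gkUt (st j.+1) =
  (fun k => tprod A (gkV (st j.+1)) k - tubemul (gkb (st j.+1)) (gkU (st j)) k).
Proof. by []. Qed.
Lemma stU j : gkU (st j.+1) = (normalization (gkUt (st j.+1))).1. Proof. by []. Qed.
Lemma sta j : gka (st j.+1) = (normalization (gkUt (st j.+1))).2. Proof. by []. Qed.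

Lemma real_state j : real_tensor A -> real_tensor B ->
  [/\ real_tensor (gkU (st j)), real_tensor (gka (st j)),
      real_tensor (gkV (st j)) & real_tensor (gkb (st j))].
Proof.
move=> rA rB; elim: j => [|j [rU ra rV rb]].
  by split; [apply: real_norm1 | apply: real_norm2 | apply: real0 | apply: real_to].
have rVt : real_tensor (gkVt (st j.+1)).
  rewrite stVt; apply: real_sub; first by apply: real_tprod => //; apply: real_ttrans.
  exact: real_tubemul.
have rV' : real_tensor (gkV (st j.+1)) by rewrite stV; apply: real_norm1.
have rb' : real_tensor (gkb (st j.+1)) by rewrite stb; apply: real_norm2.
have rUt : real_tensor (gkUt (st j.+1)).
  rewrite stUt; apply: real_sub; first by apply: real_tprod.
  exact: real_tubemul.
split => //; first by rewrite stU; apply: real_norm1.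
by rewrite sta; apply: real_norm2.
Qed.

Lemma slice_main K (k : 'I_n3) : real_tensor A -> real_tensor B ->
  gk_no_breakdown A B K -> forall i l, (i <= K)%N -> (l <= K)%N ->
  ip (fft (gkU (st i)) k) (fft (gkU (st l)) k) = (i == l)%:R /\
  ip (fft (gkV (st i)) k) (fft (gkV (st l)) k) = ((i == l) && (0 < i)%N)%:R.
Proof.
move=> rA rB [nbB nb].
have nbV j : (j < K)%N -> fnorm (fft (gkVt (st j.+1)) k) != 0.
  by move=> jK; have [h _] := nb j.+1 jK; apply: h.
have nbU j : (j < K)%N -> fnorm (fft (gkUt (st j.+1)) k) != 0.
  by move=> jK; have [_ h] := nb j.+1 jK; apply: h.
have eVt j : fft (gkVt (st j.+1)) k =
    (mconj (fft A k))^T *m fft (gkU (st j)) k - fft (gka (st j)) k 0 0 *: fft (gkV (st j)) k.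
  by rewrite stVt fft_sub fft_tprod fft_ttrans // fft_tubemul.
have eUt j : fft (gkUt (st j.+1)) k =
    fft A k *m fft (gkV (st j.+1)) k - fft (gkb (st j.+1)) k 0 0 *: fft (gkU (st j)) k.
  by rewrite stUt fft_sub fft_tprod fft_tubemul.
have h0 : fft (gkV (st 0)) k = 0 by apply: fft0.
have h1 : ip (fft (gkU (st 0)) k) (fft (gkU (st 0)) k) = 1.
  by rewrite /= fft_norm1; apply: ip_normalize; apply: nbB.
have h2 : forall j, conjc (fft (gka (st j)) k 0 0) = fft (gka (st j)) k 0 0.
  case=> [|j]; last by rewrite sta fft_norm2 fnorm_conj.
  have -> : gka (st 0) = (normalization B).2 by [].
  by rewrite fft_norm2 fnorm_conj.
have h3 : forall j, conjc (fft (gkb (st j)) k 0 0) = fft (gkb (st j)) k 0 0.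
  case=> [|j]; last by rewrite stb fft_norm2 fnorm_conj.
  have -> : gkb (st 0) = @to R n3 by [].
  by rewrite /to fft0 mxE rmorph0.
have h4 : forall j, (j < K)%N -> fft (gkb (st j.+1)) k 0 0 *: fft (gkV (st j.+1)) k =
    (mconj (fft A k))^T *m fft (gkU (st j)) k - fft (gka (st j)) k 0 0 *: fft (gkV (st j)) k.
  move=> j jK; rewrite stb stV fft_norm2 fft_norm1 scalerA mulfV ?scale1r ?nbV //.
have h5 : forall j, (j < K)%N -> fft (gka (st j.+1)) k 0 0 *: fft (gkU (st j.+1)) k =
    fft A k *m fft (gkV (st j.+1)) k - fft (gkb (st j.+1)) k 0 0 *: fft (gkU (st j)) k.
  move=> j jK; rewrite sta stU fft_norm2 fft_norm1 scalerA mulfV ?scale1r ?nbU //.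
have h6 : forall j, (j < K)%N -> ip (fft (gkV (st j.+1)) k) (fft (gkV (st j.+1)) k) = 1.
  by move=> j jK; rewrite stV fft_norm1; apply: ip_normalize; apply: nbV.
have h7 : forall j, (j < K)%N -> ip (fft (gkU (st j.+1)) k) (fft (gkU (st j.+1)) k) = 1.
  by move=> j jK; rewrite stU fft_norm1; apply: ip_normalize; apply: nbU.
have h8 : forall j, (j < K)%N -> fft (gkb (st j.+1)) k 0 0 != 0.
  by move=> j jK; rewrite stb fft_norm2; apply: nbV.
have h9 : forall j, (j < K)%N -> fft (gka (st j.+1)) k 0 0 != 0.
  by move=> j jK; rewrite sta fft_norm2; apply: nbU.
exact: (@slice_orth R n1 n2 s (fft A k) (fun j => fft (gkU (st j)) k)
   (fun j => fft (gkV (st j)) k) (fun j => fft (gka (st j)) k 0 0)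
   (fun j => fft (gkb (st j)) k 0 0) K h0 h1 h2 h3 h4 h5 h6 h7 h8 h9 K (leqnn K)).
Qed.
End Main.

Unset Implicit Arguments.

Theorem proposition12 (R : realType) (n1 n2 n3 s k : nat)
  (A : tensor R n1 n2 n3) (B : tensor R n1 s n3) :
  real_tensor A -> real_tensor B ->
  gk_no_breakdown A B k ->
  (forall i j, (1 <= i <= k)%N -> (1 <= j <= k)%N ->
     tinner (gkV_ A B i) (gkV_ A B j) =1
       (if i == j then @te R n3 else @to R n3)) /\
  (forall i j, (1 <= i <= k.+1)%N -> (1 <= j <= k.+1)%N ->
     tinner (gkU_ A B i) (gkU_ A B j) =1
       (if i == j then @te R n3 else @to R n3)).
Proof.
move=> rA rB nb; split.
- move=> i j /andP[i1 ik] /andP[j1 jk].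
  have [_ _ rV _] := @real_state R n1 n2 n3 s A B i rA rB.
  apply: tinner_delta => // x.
  have [_ ->] := @slice_main R n1 n2 n3 s A B k x rA rB nb i j ik jk.
  by rewrite i1 andbT.
- move=> [|i] [|j] /andP[i1 ik] /andP[j1 jk] //.
  rewrite ltnS in ik; rewrite ltnS in jk.
  have [rU _ _ _] := @real_state R n1 n2 n3 s A B i rA rB.
  rewrite /gkU_ /=; apply: tinner_delta => // x.
  have [-> _] := @slice_main R n1 n2 n3 s A B k x rA rB nb i j ik jk.
  by rewrite eqSS.
Qed.
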